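(* Let $p,q$ be primes and let $G$ be a non-abelian group of order $pq$. Then $G$ is a metacyclic group with trivial centre, and its right and left commutation semigroups $\mathrm{P}(G)$ and $\Lambda(G)$ are complete (with respect to a presentation of $G$ as $G(m,n,k)$).
   Context: For positive integers $m,n,k$ with $(m,k-1)=1$ and $n=\mathrm{ind}_m(k)$ (the least $d\ge1$ with $k^d\equiv1\pmod m$), $G(m,n,k)=\langle a,b;\ a^m=1,\ b^n=1,\ b^{-1}ab=a^k\rangle$; elements are written uniquely as $a^ib^j$, $i\in\mathbb{Z}_m$, $j\in\mathbb{Z}_n$, and $k_t=k^t-1\pmod m$. Commutators are $[x,y]=x^{-1}y^{-1}xy$; $(x)\rho(g)=[x,g]$, $(x)\lambda(g)=[g,x]$; maps are written on the right and composed left to right; $\mathrm{P}(G)$, $\Lambda(G)$ are the semigroups generated by all $\rho(g)$, resp. all $\lambda(g)$. With $R=\{k_j:j\in\mathbb{Z}_n\}$, $L=\{-k_j:j\in\mathbb{Z}_n\}$ one has $\mathrm{P}(G)=\Sigma_G(R)$, $\Lambda(G)=\Sigma_G(L)$, and completeness of $\mathrm{P}(G)$, $\Lambda(G)$ means completeness of $\Sigma_G(R)$, $\Sigma_G(L)$. Here: $(a^ib^j)\mu(x,y)=a^{xik^j-yk_j}$, $C(x,y)=\{\mu(x,yz):z\in\mathbb{Z}_m\}$; $S^*$ is the multiplicative subsemigroup of $\mathbb{Z}_m$ generated by $S$; $\Sigma_G(S)$ is the semigroup generated by $\{\mu(s,z):s\in S,z\in\mathbb{Z}_m\}$; for $x\in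 S^*$, $Y(x)=\{s^*z: s^*\in S^*, z\in\mathbb{Z}_m, \exists s\in S,\ x\equiv ss^*\}$; the $x$-family $\{C(x,y):y\in Y(x)\}$ is complete if it contains $C(x,1)$; $\Sigma_G(S)$ is complete if all $x$-families ($x\in S^*$) are complete. *)

(* Defs.v *)
From mathcomp Require Import all_boot all_order all_algebra all_fingroup all_solvable.
Set Implicit Arguments. Unset Strict Implicit. Unset Printing Implicit Defensive.
Import GRing.Theory Num.Theory.
Local Open Scope ring_scope.

Definition is_ind (m k n : nat) : Prop :=
  [/\ (0 < n)%N, (k ^ n = 1 %[mod m])%N &
      forall d : nat, (0 < d)%N -> (d < n)%N -> (k ^ d <> 1 %[mod m])%N].

Definition kt (k t : nat) : int := (k ^ t)%:Z - 1.

(* (a^i b^j) mu(x,y) = a^(x i k^j - y k_j) : exponent of a, reduced mod m *)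
Definition mu (m k : nat) (x y : int) (i : int) (j : nat) : int :=
  ((x * i * (k ^ j)%:Z - y * kt k j) %% m%:Z)%Z.

(* mu(x,y) = mu(x',y') as maps on G(m,n,k) = { a^i b^j : i in Z_m, j in Z_n } *)
Definition mu_eq (m n k : nat) (x y x' y' : int) : Prop :=
  forall (i j : nat), (i < m)%N -> (j < n)%N ->
    mu m k x y i%:Z j = mu m k x' y' i%:Z j.

(* C(x,y) = C(x,y') as sets of maps {mu(x, y z) : z in Z_m} *)
Definition C_eq (m n k : nat) (x y y' : int) : Prop :=
  (forall z : int, exists z' : int, mu_eq m n k x (y * z) x (y' * z')) /\
  (forall z' : int, exists z : int, mu_eq m n k x (y' * z') x (y * z)).

(* S^* : multiplicative subsemigroup of Z_m generated by S (membership up to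
   congruence mod m) *)
Inductive Sstar (m : nat) (S : int -> Prop) : int -> Prop :=
  | Sstar_gen s x : S s -> (x = s %[mod m%:Z])%Z -> Sstar m S x
  | Sstar_mul a b x : Sstar m S a -> Sstar m S b ->
      (x = a * b %[mod m%:Z])%Z -> Sstar m S x.

Definition Yset (m : nat) (S : int -> Prop) (x y : int) : Prop :=
  exists (ss z s : int), [/\ Sstar m S ss, S s,
    (x = s * ss %[mod m%:Z])%Z & (y = ss * z %[mod m%:Z])%Z].

Definition family_complete (m n k : nat) (S : int -> Prop) (x : int) : Prop :=
  exists y : int, Yset m S x y /\ C_eq m n k x y 1.

Definition Sigma_complete (m n k : nat) (S : int -> Prop) : Prop :=
  forall x : int, Sstar m S x -> family_complete m n k S x.

Definition Rset (m n k : nat) (s : int) : Prop :=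
  exists j : nat, (j < n)%N /\ (s = kt k j %[mod m%:Z])%Z.
Definition Lset (m n k : nat) (s : int) : Prop :=
  exists j : nat, (j < n)%N /\ (s = - kt k j %[mod m%:Z])%Z.

Definition P_complete (m n k : nat) : Prop := Sigma_complete m n k (Rset m n k).
Definition Lambda_complete (m n k : nat) : Prop := Sigma_complete m n k (Lset m n k).

(* Main.v *)
Require Import Defs.
From mathcomp Require Import all_boot all_order all_algebra all_fingroup all_solvable.
From mathcomp Require Import ring zify.
Import GRing.Theory Num.Theory.
Section Compl.
Local Open Scope ring_scope.

Lemma eqmP (m : nat) (a b : int) : (a = b %[mod m%:Z])%Z <-> (m%:Z %| a - b)%Z.
Proof. by split=> [/eqP|H]; [rewrite eqz_mod_dvd | apply/eqP; rewrite eqz_mod_dvd]. Qed.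

Lemma unit_inv (m : nat) (x : int) : prime m -> ~~ (m%:Z %| x)%Z ->
  exists w, (x * w = 1 %[mod m%:Z])%Z.
Proof.
move=> pm ndx.
have cop : coprimez x m%:Z.
  by rewrite coprimezE coprime_sym prime_coprime //; rewrite dvdzE in ndx.
case/coprimezP: cop => [[u v]] /= H; exists u; apply/eqmP.
have -> : x * u - 1 = - (v * m%:Z) by rewrite -H; ring.
by rewrite rpredN dvdz_mull.
Qed.

Lemma mu_congr m k x y y' i j : (y = y' %[mod m%:Z])%Z ->
  mu m k x y i j = mu m k x y' i j.
Proof.
move/eqmP=> H; apply/eqmP.
have -> : x * i * (k ^ j)%:Z - y * kt k j - (x * i * (k ^ j)%:Z - y' * kt k j)
   = - ((y - y') * kt k j) by ring.
by rewrite rpredN dvdz_mulr.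
Qed.

Lemma C_eq_unit m n k x y : (exists w, (y * w = 1 %[mod m%:Z])%Z) -> C_eq m n k x y 1.
Proof.
case=> w Hw; split.
  by move=> z; exists (y * z) => i j _ _; rewrite mul1r.
move=> z'; exists (w * z') => i j _ _; apply: mu_congr.
rewrite mul1r mulrA; apply/eqmP; move/eqmP: Hw => Hw.
have -> : z' - y * w * z' = - ((y * w - 1) * z') by ring.
by rewrite rpredN dvdz_mulr.
Qed.

Lemma Sstar_pow m (S : int -> Prop) u e : S u -> Sstar m S (u ^+ e.+1).
Proof.
move=> Su; elim: e => [|e IH]; first by apply: (Sstar_gen Su); rewrite expr1.
by apply: (Sstar_mul IH (Sstar_gen Su (erefl _))); rewrite exprSr.
Qed.

Lemma compl_gen (m n k : nat) (S : int -> Prop) (u : int) (e : nat) :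
  prime m -> S 0 -> S u -> (u ^+ e.+2 = 1 %[mod m%:Z])%Z ->
  Sigma_complete m n k S.
Proof.
move=> pm S0 Su He x Sx.
have uinv : exists w, (u * w = 1 %[mod m%:Z])%Z.
  by exists (u ^+ e.+1); rewrite -exprS.
have [dx | ndx] := boolP (m%:Z %| x)%Z.
  exists u; split; last exact: C_eq_unit.
  exists u, 1, 0; split => //.
  - exact: (Sstar_gen Su).
  - by apply/eqmP; rewrite mul0r subr0.
  - by rewrite mulr1.
have [w Hw] := unit_inv m x pm ndx.
exists (x * u ^+ e.+1); split.
  exists (x * u ^+ e.+1), 1, u; split => //.
  - exact: (Sstar_mul Sx (Sstar_pow m S u e Su) (erefl _)).
  - apply/eqmP; move/eqmP: He => He.
    have -> : x - u * (x * u ^+ e.+1) = - ((u ^+ e.+2 - 1) * x) by rewrite [u ^+ e.+2]exprS; ring.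
    by rewrite rpredN dvdz_mulr.
  - by rewrite mulr1.
apply: C_eq_unit; exists (w * u); apply/eqmP.
move/eqmP: He => He; move/eqmP: Hw => Hw.
have -> : x * u ^+ e.+1 * (w * u) - 1 = (x * w - 1) * u ^+ e.+2 + (u ^+ e.+2 - 1)
  by rewrite [u ^+ e.+2]exprS; ring.
by rewrite rpredD ?dvdz_mulr.
Qed.
Lemma PL_complete (q n k : nat) : prime q -> (2 < q)%N -> (1 < n)%N -> (0 < k)%N ->
  coprime q (k - 1) -> P_complete q n k /\ Lambda_complete q n k.
Proof.
move=> pq q2 n1 k0 cop.
have kt0 : kt k 0 = 0 by rewrite /kt expn0 subrr.
have kt1 : kt k 1 = (k - 1)%N%:Z by rewrite /kt expn1 subzn.
have Eu : ((kt k 1) ^+ (q - 1) = 1 %[mod q%:Z])%Z.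
  rewrite kt1 -natz -natrX natz modz_nat.
  have -> : (q - 1)%N = totient q by rewrite totient_prime // subn1.
  by rewrite Euler_exp_totient 1?coprime_sym // modz_nat.
have e1 : (q - 1 = (q - 3).+2)%N by lia.
split.
  apply: (compl_gen q n k _ (kt k 1) (q - 3)%N) => //.
  - by exists 0%N; split; [apply: ltnW | rewrite kt0].
  - by exists 1%N; split.
  - by rewrite -e1.
apply: (compl_gen q n k _ (- kt k 1) (2 * q - 4)%N) => //.
- by exists 0%N; split; [apply: ltnW | rewrite kt0 oppr0].
- by exists 1%N.
have -> : (2 * q - 4).+2 = (2 * (q - 1))%N.
  by lia.
rewrite exprM sqrrN -exprM mulnC exprM; move/eqmP: Eu => Eu; apply/eqmP.
set A := kt k 1 ^+ (q - 1).
have -> : A ^+ 2 - 1 = (A - 1) * (A + 1) by ring.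
by rewrite dvdz_mulr.
Qed.

End Compl.

Section GroupPart.
Local Open Scope group_scope.
Variable gT : finGroupType.
Implicit Types G : {group gT}.

Lemma genG G (a b : gT) : a \in G -> b \in G -> coprime #[a] #[b] ->
  (#[a] * #[b])%N = #|G| -> <[a]> <*> <[b]> = G.
Proof.
move=> Ga Gb cop oG.
have sJ : <[a]> <*> <[b]> \subset G by rewrite join_subG !cycle_subG Ga Gb.
apply/eqP; rewrite eqEcard sJ /=.
have TI : <[a]> :&: <[b]> = 1 by apply: coprime_TIg; rewrite -!orderE.
rewrite -oG !orderE -(TI_cardMg TI); apply: subset_leq_card.
by apply: mul_subG; [apply: joing_subl | apply: joing_subr].
Qed.

Lemma abel_of G (a b : gT) : <[a]> <*> <[b]> = G -> commute a b -> abelian G.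
Proof.
move=> <- cab; rewrite abelianY !cycle_abelian /= cent_cycle cycle_subG.
by apply/cent1P; apply: commute_sym.
Qed.

End GroupPart.

Section Main.
Local Open Scope group_scope.

Lemma main_lt (gT : finGroupType) (G : {group gT}) (p q : nat) :
  prime p -> prime q -> (p < q)%N -> #|G| = (p * q)%N -> ~~ abelian G ->
  exists x y : gT, exists k : nat,
   [/\ <[x]> <*> <[y]> = G, #[x] = q, #[y] = p, <[x]> <| G &
   [/\ x ^ y = x ^+ k, (0 < k)%N, (k < q)%N & k != 1%N]].
Proof.
move=> pp pq pltq oG nab.
have p0 : (0 < p)%N by apply: prime_gt0.
have q0 : (0 < q)%N by apply: prime_gt0.
have s1 : #|'Syl_q(G)| == 1%N.
  have d : (#|'Syl_q(G)| %| p * q)%N by rewrite -oG card_Syl_dvd.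
  have m1 := card_Syl_mod G pq.
  have cop : coprime #|'Syl_q(G)| q by rewrite -coprime_modl m1 coprime1n.
  rewrite mulnC (Gauss_dvdr _ cop) in d.
  case/primeP: (pp) => _ /(_ _ d) /orP[//|/eqP ep].
  by rewrite ep modn_small // in m1; move: pp; rewrite m1.
have [P sylP nPG] := normal_sylowP _ _ s1.
have oP : #|P| = q.
  have np : (q^').-nat p.
    rewrite p'natE //; apply/negP => /(dvdn_leq p0); rewrite leqNgt pltq.
    by [].
  by rewrite (card_Hall sylP) oG partnM // (part_p'nat np) (part_pnat_id (pnat_id pq)) mul1n.
have [x defP] : exists x, P = <[x]> :> {set gT}.
  by apply/cyclicP; apply: prime_cyclic; rewrite oP.
have ox : #[x] = q by rewrite orderE -defP oP.
have [y Gy oy] : {y | y \in G & #[y] = p} by apply: Cauchy pp _; rewrite oG dvdn_mulr.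
have Gx : x \in G by rewrite (subsetP (normal_sub nPG)) // defP cycle_id.
have defG : <[x]> <*> <[y]> = G.
  apply: genG => //; first by rewrite ox oy prime_coprime // dvdn_prime2 // gtn_eqF.
  by rewrite ox oy mulnC.
have nxG : <[x]> <| G by rewrite -defP.
have : x ^ y \in <[x]>.
  by rewrite memJ_norm ?cycle_id //; apply: (subsetP (normal_norm nxG)).
case/cycleP=> k0 Hk0.
exists x, y, (k0 %% q).
have Hk : x ^ y = x ^+ (k0 %% q) by rewrite Hk0 -ox expg_mod_order.
split => //; split => //.
- rewrite lt0n; apply/negP => /eqP k00; move: Hk; rewrite k00 expg0 => /eqP.
  rewrite conjg_eq1 => /eqP x1; move: ox; rewrite x1 order1 => q1.
  by move: pq; rewrite -q1.
- by rewrite ltn_pmod.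
apply/negP => /eqP k1; move: Hk; rewrite k1 expg1 => /conjg_fixP /commgP cxy.
by move: nab; rewrite (@abel_of _ _ _ _ defG cxy).
Qed.
End Main.

Section Main2.
Local Open Scope group_scope.

Lemma ind_lemma (q p k : nat) : prime q -> prime p -> (k < q)%N -> k != 1%N ->
  (k ^ p = 1 %[mod q])%N -> is_ind q k p.
Proof.
move=> pq pp kq k1 Kp; split => //; first exact: prime_gt0.
move=> d d0 dp Hd; have [km kn E _] := egcdnP p d0.
have cop : gcdn d p = 1%N.
  apply/eqP; rewrite -/(coprime d p) coprime_sym prime_coprime //.
  by apply/negP => /(dvdn_leq d0); rewrite leqNgt dp.
rewrite cop in E.
have e1 : (k ^ (km * d) = 1 %[mod q])%N.
  by rewrite mulnC expnM -modnXm Hd modnXm exp1n.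
have e2 : (k ^ (kn * p + 1) = k %[mod q])%N.
  rewrite expnD expn1 (mulnC kn) expnM -modnMml -modnXm Kp modnXm exp1n modnMml mul1n //.
move: e1; rewrite E e2 modn_small // modn_small ?prime_gt1 // => /eqP.
by rewrite (negbTE k1).
Qed.

End Main2.

Section Main3.
Local Open Scope group_scope.

Lemma Zp_one (n m : nat) : (1 < n)%N -> (m %% n = 1)%N -> ((m%:R)%R : 'Z_n) = 1%R.
Proof. by move=> n1 H; rewrite -Zp_nat_mod // H. Qed.

Lemma aut_exists (q p k : nat) : prime q -> coprime q k -> (k ^ p = 1 %[mod q])%N ->
  exists s : {perm 'Z_q}, [/\ s \in Aut <[Zp1 : 'Z_q]>, (#[s] %| p)%N & s Zp1 = (Zp1 : 'Z_q) ^+ k].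
Proof.
move=> pq cop Kp.
have q1 := prime_gt1 pq.
have ob : #[Zp1 : 'Z_q] = q by rewrite order_Zp1 Zp_cast.
have uk : ((k%:R)%R : 'Z_#[Zp1 : 'Z_q]) \is a GRing.unit by rewrite unitZpE ob.
pose u := FinRing.unit _ uk.
exists (Zp_unitm u); split.
- exact: Aut_aut.
- rewrite order_injm ?injm_Zp_unitm ?in_setT // order_dvdn -val_eqE /= FinRing.val_unitX /=.
  rewrite -GRing.natrX; apply/eqP; apply: Zp_one; rewrite ob //.
  by rewrite Kp modn_small.
- rewrite autE ?cycle_id //= /cyclem.
  by rewrite val_Zp_nat ?ob // -[X in (_ %% X)%N]ob expg_mod_order.
Qed.

End Main3.

Section Main4.
Local Open Scope group_scope.

Lemma final_lt (gT : finGroupType) (G : {group gT}) (p q : nat) :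
  prime p -> prime q -> (p < q)%N -> #|G| = (p * q)%N -> ~~ abelian G ->
  [/\ metacyclic G, ('Z(G) = 1)%g &
      exists m n k : nat,
        [/\ [/\ (0 < m)%N, (0 < k)%N, coprime m (k - 1) & is_ind m k n],
            (G \isog Grp (a : b : (a ^+ m, b ^+ n, a ^ b = a ^+ k)))%g,
            P_complete m n k & Lambda_complete m n k]].
Proof.
move=> pp pq pltq oG nab.
have [x [y [k [defG ox oy nxG [Hk k0 kq k1]]]]] := main_lt gT G p q pp pq pltq oG nab.
have p1 := prime_gt1 pp; have q1 := prime_gt1 pq.
have q2 : (2 < q)%N by apply: leq_ltn_trans pltq.
have Gx : x \in G by rewrite -defG mem_gen // inE cycle_id.
have Gy : y \in G by rewrite -defG mem_gen // inE cycle_id orbT.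
have conjpow : forall i, x ^ (y ^+ i) = x ^+ (k ^ i).
  elim=> [|i IH]; first by rewrite expg0 conjg1 expn0 expg1.
  by rewrite expgSr conjgM IH conjXg Hk -expgM -expnS.
have Kp : (k ^ p = 1 %[mod q])%N.
  have := conjpow p; rewrite -oy expg_order conjg1 => /eqP.
  by rewrite -{1}(expg1 x) eq_expg_mod_order ox eq_sym => /eqP.
have cop : coprime q (k - 1).
  rewrite prime_coprime //; apply/negP => /(dvdn_leq _) H.
  have : (0 < k - 1)%N by rewrite subn_gt0 ltn_neqAle eq_sym k1.
  by move/H; rewrite leqNgt (leq_ltn_trans (leq_subr 1 k) kq).
have copk : coprime q k.
  rewrite prime_coprime //; apply/negP => /(dvdn_leq k0); rewrite leqNgt kq.
  by [].
split.
- apply/metacyclicP; exists <[x]>%G; split; rewrite ?cycle_cyclic //.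
  apply: prime_cyclic; rewrite card_quotient ?normal_norm //.
  have := Lagrange (normal_sub nxG); rewrite -orderE ox oG mulnC => /eqP.
  by rewrite eqn_pmul2r ?prime_gt0 // => /eqP ->.
- have [//|ntZ] := eqVneq 'Z(G) 1.
  have Z1 : (1 < #|'Z(G)|)%N by rewrite cardG_gt1.
  have pr := pdiv_prime Z1.
  have [z Zz oz] := Cauchy pr (pdiv_dvd #|'Z(G)|).
  have Gz : z \in G by apply: (subsetP (center_sub G)).
  have cz : forall w, w \in G -> commute z w.
    by move=> w Gw; case/centerP: Zz => _ /(_ w Gw).
  have : (pdiv #|'Z(G)| %| p * q)%N.
    by rewrite -oG (dvdn_trans (pdiv_dvd _)) // cardSg // center_sub.
  rewrite Euclid_dvdM // !dvdn_prime2 // => /orP[] /eqP ep; rewrite ep in oz.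
  + have dG : <[x]> <*> <[z]> = G.
      apply: genG => //; first by rewrite ox oz prime_coprime // dvdn_prime2 // gtn_eqF.
      by rewrite ox oz mulnC.
    by move: nab; rewrite (@abel_of _ _ _ _ dG (commute_sym (cz x Gx))).
  + have dG : <[z]> <*> <[y]> = G.
      apply: genG => //; first by rewrite oy oz prime_coprime // dvdn_prime2 // gtn_eqF.
      by rewrite oy oz mulnC.
    by move: nab; rewrite (@abel_of _ _ _ _ dG (cz y Gy)).
exists q, p, k; split.
- by split => //; [apply: prime_gt0 | apply: (ind_lemma q p k)].
- have isoE := @Extremal.Grp q p k p1 q1 (aut_exists q p k pq copk Kp).
  apply: (isoGrp_trans _ isoE); apply/(isoGrpP _ isoE); split.
    by rewrite Extremal.card.
  apply/existsP; exists (x, y); rewrite /= !xpair_eqE.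
  by rewrite defG -ox -oy !expg_order Hk !eqxx.
- by case: (PL_complete q p k pq q2 p1 k0 cop).
- by case: (PL_complete q p k pq q2 p1 k0 cop).
Qed.

End Main4.

Theorem theorem6p6 (gT : finGroupType) (G : {group gT}) (p q : nat) :
  prime p -> prime q -> #|G| = (p * q)%N -> ~~ abelian G ->
  [/\ metacyclic G, ('Z(G) = 1)%g &
      exists m n k : nat,
        [/\ [/\ (0 < m)%N, (0 < k)%N, coprime m (k - 1) & is_ind m k n],
            (G \isog Grp (a : b : (a ^+ m, b ^+ n, a ^ b = a ^+ k)))%g,
            P_complete m n k & Lambda_complete m n k]].
Proof.
move=> pp pq oG nab.
case: (ltngtP p q) => [lt|gt|eq].
- exact: (final_lt gT G p q).
- by apply: (final_lt gT G q p) => //; rewrite mulnC.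
- by move: nab; rewrite (card_p2group_abelian pp) // oG eq.
Qed.
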